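(* If $\tilde w\in\widetilde W$ satisfies $\tilde w\alpha>0$ for all $\alpha\in\Delta(L)$, then $L\cap\tilde w^{-1}I^-\tilde w=B_L^-$.
   Context: $k$ a field, $G=\mathrm{GL}_n$, $s$ a variable; $I^-=\{g\in\mathrm{GL}_n(k[s^{-1}]):g|_{s^{-1}=0}\text{ lower triangular}\}$, $I\subset\mathrm{GL}_n(k[[s]])$ the preimage of upper triangular matrices. Affine roots $\alpha_{ij}+r$ have root subgroups $\{1+as^rE_{ij}\}$; an affine root is positive ($>0$) if its root subgroup lies in $I$. $\widetilde W$ = monomial matrices $w\,\mathrm{diag}(s^{\lambda_i})$, acting on affine roots by conjugation. Fix $1\le d\le n$. $L\subset\mathrm{GL}_n(k((s)))$ is the subgroup generated by the diagonal torus $T(k)$ and the root subgroups $\{1+as^{(i-j)/d}E_{ij}\}$, $i\equiv j\bmod d$, $i\ne j$ (isomorphic to $\{g\in\mathrm{GL}_n(k):g_{ij}=0\text{ unless }i\equiv j\bmod d\}$ via $s^{(i-j)/d}E_{ij}\mapsto E_{ij}$). $\Delta(L)=\{\alpha_{i,i+d}-1:1\le i\le n-d\}$ is its set of simple affine roots, and $B_L^-$ is the subgroup of $L$ generated by $T(k)$ and the root subgroups of $L$ with $i>j$. *)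

(* Defs.v *)
From HB Require Import structures.
From mathcomp Require Import all_boot all_order all_algebra all_fingroup.
From mathcomp Require Import fraction.
Set Implicit Arguments. Unset Strict Implicit. Unset Printing Implicit Defensive.
Import Order.TTheory GRing.Theory Num.Theory.
Local Open Scope ring_scope.

(* The field k(s) of rational functions in s; it contains k[s,s^-1] and
   k[s^-1], and all groups considered below live in GL_n(k(s)) inside
   GL_n(k((s))). *)
Notation "x %:F" := (@FracField.tofrac _ x).
Definition Ks (k : fieldType) := {fraction {poly k}}.

Definition cst (k : fieldType) (a : k) : Ks k := (a%:P)%:F.
Definition svar (k : fieldType) : Ks k := ('X : {poly k})%:F.

(* root subgroup element 1 + a s^r E_ij of the affine root alpha_ij + r *)
Definition rootel (k : fieldType) (n : nat) (i j : 'I_n) (r : int) (a : k)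
  : 'M[Ks k]_n := 1%:M + (cst a * svar k ^ r) *: delta_mx i j.

Definition wtil (k : fieldType) (n : nat) (w : 'S_n) (lam : 'I_n -> int)
  : 'M[Ks k]_n := perm_mx w *m diag_mx (\row_i (svar k ^ lam i)).

Definition conjm (k : fieldType) (n : nat) (x g : 'M[Ks k]_n) : 'M[Ks k]_n :=
  x *m g *m invmx x.

(* I^- = { g in GL_n(k[s^-1]) : g|_{s^-1=0} lower triangular }.  An element
   of k[s^-1] is p(s^-1) for p in k[t]. *)
Definition evinv (k : fieldType) (p : {poly k}) : Ks k :=
  (map_poly (@cst k) p).[(svar k)^-1].
Definition Iminus (k : fieldType) (n : nat) (g : 'M[Ks k]_n) : Prop :=
  exists P : 'M[{poly k}]_n,
    [/\ P \in unitmx, g = map_mx (@evinv k) P &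
        forall i j : 'I_n, (i < j)%N -> (P i j)`_0 = 0].

(* I intersected with M_n(k[s]): g in M_n(k[s]) whose reduction at s = 0 is
   invertible and upper triangular (this suffices for testing
   whether a root subgroup lies in I). *)
Definition Iplus (k : fieldType) (n : nat) (g : 'M[Ks k]_n) : Prop :=
  exists P : 'M[{poly k}]_n,
    [/\ g = map_mx (fun p => p%:F) P,
        map_mx (fun p : {poly k} => p`_0) P \in unitmx &
        forall i j : 'I_n, (j < i)%N -> (P i j)`_0 = 0].

(* wt (alpha_ij + r) > 0 : the root subgroup of wt(alpha), which is
   wt U_alpha wt^-1, lies in I *)
Definition wpos (k : fieldType) (n : nat) (x : 'M[Ks k]_n) (i j : 'I_n) (r : int)
  : Prop := forall a : k, Iplus (conjm x (rootel i j r a)).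

Inductive gen (k : fieldType) (n : nat) (S : 'M[Ks k]_n -> Prop)
  : 'M[Ks k]_n -> Prop :=
| gen_one : gen S 1%:M
| gen_in g : S g -> gen S g
| gen_mul g h : gen S g -> gen S h -> gen S (g *m h)
| gen_inv g : gen S g -> gen S (invmx g).

Definition torus (k : fieldType) (n : nat) (g : 'M[Ks k]_n) : Prop :=
  exists t : 'I_n -> k, (forall i, t i != 0) /\ g = diag_mx (\row_i cst (t i)).

Definition Lexp (d : nat) (n : nat) (i j : 'I_n) : int :=
  ((i%:Z - j%:Z) %/ d%:Z)%Z.

Definition Lgens (k : fieldType) (n d : nat) (g : 'M[Ks k]_n) : Prop :=
  torus g \/ exists (i j : 'I_n) (a : k),
    [/\ i != j, (i == j %[mod d])%N & g = rootel i j (Lexp d i j) a].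

Definition BLgens (k : fieldType) (n d : nat) (g : 'M[Ks k]_n) : Prop :=
  torus g \/ exists (i j : 'I_n) (a : k),
    [/\ (j < i)%N, (i == j %[mod d])%N & g = rootel i j (Lexp d i j) a].

Definition Lgrp (k : fieldType) (n d : nat) := gen (@Lgens k n d).
Definition BLminus (k : fieldType) (n d : nat) := gen (@BLgens k n d).

(* Main.v *)
Require Import Defs.
From HB Require Import structures.
From mathcomp Require Import all_boot all_order all_algebra all_fingroup.
From mathcomp Require Import fraction zify ring.
Import Order.TTheory GRing.Theory Num.Theory.
Local Open Scope ring_scope.

Lemma inv_of_mul1 {R : comUnitRingType} {n : nat} (A B : 'M[R]_n) :
  A *m B = 1%:M -> invmx A = B.
Proof.
move=> h; have [uA _] := mulmx1_unit h.
by rewrite -(mulKmx uA B) h mulmx1.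
Qed.

Lemma map_invmx_unit {R S : comUnitRingType} (f : {rmorphism R -> S}) {n : nat}
  (A : 'M[R]_n) : A \in unitmx -> map_mx f (invmx A) = invmx (map_mx f A).
Proof.
move=> uA; symmetry; apply: inv_of_mul1.
by rewrite -map_mxM mulmxV // map_mx1.
Qed.

Lemma inv_closed {F : fieldType} {n : nat} (S : 'M[F]_n -> Prop) :
  S 1%:M -> (forall A B, S A -> S B -> S (A + B)) ->
  (forall a A, S A -> S (a *: A)) ->
  (forall A B, S A -> S B -> S (A *m B)) ->
  forall A, S A -> S (invmx A).
Proof.
move=> S1 SD SZ SM A SA.
case: n S S1 SD SZ SM A SA => [|n] S S1 SD SZ SM A SA.
  suff -> : invmx A = 1%:M by [].
  by apply/matrixP => -[].
have [uA|nuA] := boolP (A \in unitmx); last by rewrite invmx_out.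
have Sh : forall p, S (horner_mx A p).
  elim/poly_ind => [|p c IH].
    by rewrite rmorph0 -(scale0r (1%:M : 'M[F]_n.+1)); apply: SZ.
  rewrite rmorphD rmorphM /= horner_mx_X horner_mx_C -mulmxE -scalemx1.
  by apply: SD; [apply: SM | apply: SZ].
set p := char_poly A.
have hp := poly_take_drop 1 p.
have ht : take_poly 1 p = (p`_0)%:P.
  apply/polyP => i; rewrite coef_take_poly coefC; case: i => [|i] //=.
have CH := Cayley_Hamilton A.
rewrite -/p -hp ht expr1 rmorphD rmorphM /= horner_mx_X horner_mx_C in CH.
set q := drop_poly 1 p in CH.
have p0 : p`_0 != 0.
  rewrite /p char_poly_det mulf_eq0 negb_or signr_eq0 /=.
  by rewrite -unitfE -unitmxE.
have -> : invmx A = (- (p`_0)^-1) *: horner_mx A q.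
  apply: inv_of_mul1.
  have cm : horner_mx A q *m A = A *m horner_mx A q.
    rewrite -{2 3}(horner_mx_X A) !mulmxE -!rmorphM; congr (horner_mx A _); exact: mulrC.
  rewrite -scalemxAr -cm.
  have -> : horner_mx A q *m A = - (p`_0)%:M.
    by apply/eqP; rewrite -addr_eq0 mulmxE addrC CH.
  by rewrite scalerN scaleNr opprK -[(p`_0)%:M]scalemx1 scalerA mulVf // scale1r.
by apply: SZ; apply: Sh.
Qed.
Definition cstR (k : fieldType) : {rmorphism k -> Ks k} :=
  (@FracField.tofrac _ : {poly k} -> Ks k) \o (@polyC k).
Lemma cstE (k : fieldType) (a : k) : cst a = cstR k a. Proof. by []. Qed.

Lemma cstcomm (k : fieldType) : commr_rmorph (cstR k) (svar k)^-1.
Proof. move=> a; exact: mulrC. Qed.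

Definition evR (k : fieldType) : {rmorphism {poly k} -> Ks k} :=
  horner_morph (@cstcomm k).
Lemma evinvE (k : fieldType) (p : {poly k}) : evinv p = evR k p.
Proof. by rewrite /evinv /evR /horner_morph; congr horner; apply: eq_map_poly. Qed.

Lemma svar_neq0 (k : fieldType) : svar k != 0.
Proof. by rewrite /svar tofrac_eq0 polyX_eq0. Qed.

Lemma pow_poly_ge0 (k : fieldType) (f : int) (p : {poly k}) :
  svar k ^ f = p%:F -> (0 <= f)%R.
Proof.
case: f => [m|m] // h; exfalso.
have : (p * 'X^(m.+1))%:F = 1%:F.
  rewrite rmorphM rmorphXn /= -h NegzE -exprnN -/(svar k).
  by rewrite mulVf // expf_neq0 // svar_neq0.
move/eqP; rewrite tofrac_eq => /eqP /(congr1 (fun q : {poly k} => q`_0)).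
by rewrite coefMXn /= coef1 /=; move/eqP; rewrite eq_sym oner_eq0.
Qed.

Lemma evinv_pow (k : fieldType) (c : k) (e : nat) (p : {poly k}) :
  c != 0 -> cst c * svar k ^+ e = evinv p -> e = 0%N /\ p`_0 = c.
Proof.
move=> c0 h.
set m := size p.
have key : evinv p * svar k ^+ m = (\sum_(i < m.+1) p`_i *: 'X^(m - i))%:F.
  rewrite evinvE /evR /= /horner_morph (@horner_coef_wide _ m.+1); last first.
    by rewrite size_map_poly.
  rewrite mulr_suml rmorph_sum; apply: eq_bigr => i _.
  rewrite coef_map /= -mul_polyC rmorphM rmorphXn /= -mulrA -/(svar k).
  congr (_ * _).
  have hi : (i <= m)%N by rewrite -ltnS.
  rewrite -{2}(subnK hi) exprD mulrC -mulrA exprVn mulfV ?mulr1 //.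
  by rewrite expf_neq0 // svar_neq0.
have h2 : (c%:P * 'X^(e + m))%:F = (\sum_(i < m.+1) p`_i *: 'X^(m - i))%:F.
  by rewrite -key -h rmorphM rmorphXn exprD mulrA.
move/eqP: h2; rewrite tofrac_eq => /eqP /(congr1 (fun q : {poly k} => q`_(e + m))).
rewrite coefCM coefXn eqxx mulr1 coef_sum big_ord_recl /= subn0 coefZ coefXn.
rewrite big1 ?addr0; last first.
  move=> i _; rewrite coefZ coefXn.
  have -> : (e + m == m - bump 0 i)%N = false.
    apply/negbTE; rewrite /bump /=; have := ltn_ord i; lia.
  by rewrite mulr0.
clear h key; case: e => [|e] /=.
  by rewrite add0n eqxx mulr1.
have -> : (e.+1 + m == m)%N = false by apply/negbTE; lia.
by rewrite mulr0 => c00; rewrite c00 eqxx in c0.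
Qed.
Definition wtinv (k : fieldType) {n : nat} (w : 'S_n) (lam : 'I_n -> int) :
  'M[Ks k]_n := diag_mx (\row_i svar k ^ (- lam i)) *m perm_mx (w^-1)%g.

Lemma wt_mulV (k : fieldType) {n : nat} (w : 'S_n) (lam : 'I_n -> int) :
  wtil k w lam *m wtinv k w lam = 1%:M.
Proof.
rewrite /wtil /wtinv mulmxA -(mulmxA (perm_mx w)).
have -> : diag_mx (\row_i svar k ^ lam i) *m diag_mx (\row_i svar k ^ (- lam i))
   = 1%:M.
  apply/matrixP => i j; rewrite mul_diag_mx !mxE.
  case: (i =P j) => [->|_]; last by rewrite mulr0.
  by rewrite !mulr1n -expfzDr ?svar_neq0 // subrr.
by rewrite mulmx1 -perm_mxM mulgV perm_mx1.
Qed.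

Lemma wt_unit (k : fieldType) {n : nat} (w : 'S_n) (lam : 'I_n -> int) :
  wtil k w lam \in unitmx.
Proof. exact: (proj1 (@mulmx1_unit (Ks k) n _ _ (wt_mulV k w lam))). Qed.

Lemma wt_inv (k : fieldType) {n : nat} (w : 'S_n) (lam : 'I_n -> int) :
  invmx (wtil k w lam) = wtinv k w lam.
Proof. exact: (@inv_of_mul1 (Ks k) n _ _ (wt_mulV k w lam)). Qed.

Lemma conj_entry (k : fieldType) {n : nat} (w : 'S_n) (lam : 'I_n -> int)
  (X : 'M[Ks k]_n) a b :
  conjm (wtil k w lam) X a b =
  svar k ^ (lam (w a)) * X (w a) (w b) * svar k ^ (- lam (w b)).
Proof.
rewrite /conjm wt_inv /wtil /wtinv.
rewrite !mulmxA -(mulmxA (perm_mx w)) -(mulmxA (perm_mx w)) -(mulmxA (perm_mx w)).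
rewrite -row_permE -col_permE mul_mx_diag mul_diag_mx !mxE.
reflexivity.
Qed.

Definition lowt {F : nzRingType} {n : nat} (M : 'M[F]_n) : Prop :=
  forall i j : 'I_n, (i < j)%N -> M i j = 0.

Lemma lowt_inv {F : fieldType} {n : nat} {M : 'M[F]_n} : lowt M -> lowt (invmx M).
Proof.
apply: inv_closed.
- by move=> i j ij; rewrite mxE; case: eqVneq => // e; rewrite e ltnn in ij.
- by move=> A B hA hB i j ij; rewrite mxE hA // hB // addr0.
- by move=> a A hA i j ij; rewrite mxE hA // mulr0.
- move=> A B hA hB i j ij; rewrite mxE big1 // => l _.
  case: (ltnP i l) => il; first by rewrite hA // mul0r.
  by rewrite hB ?mulr0 //; apply: leq_ltn_trans ij.
Qed.

Definition c0R (k : fieldType) : {rmorphism {poly k} -> k} := horner_eval 0.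
Lemma c0RE (k : fieldType) (p : {poly k}) : c0R k p = p`_0.
Proof. by rewrite -horner_coef0. Qed.

Lemma map_evinv (k : fieldType) {n : nat} (P : 'M[{poly k}]_n) :
  map_mx (@evinv k) P = map_mx (evR k) P.
Proof. apply: eq_map_mx => p; exact: evinvE. Qed.

Lemma Iminus_one (k : fieldType) (n : nat) : Iminus (1%:M : 'M[Ks k]_n).
Proof.
exists 1%:M; split; first exact: unitmx1.
  by rewrite map_evinv map_mx1.
move=> i j ij; rewrite mxE; case: eqVneq => [e|_]; last by rewrite coef0.
by rewrite e ltnn in ij.
Qed.

Lemma Iminus_mul (k : fieldType) (n : nat) (g h : 'M[Ks k]_n) :
  Iminus g -> Iminus h -> Iminus (g *m h).
Proof.
move=> [P1 [u1 e1 l1]] [P2 [u2 e2 l2]].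
exists (P1 *m P2); split.
- by rewrite unitmx_mul u1 u2.
- by rewrite e1 e2 !map_evinv map_mxM.
move=> i j ij; rewrite mxE coef_sum big1 // => l _.
rewrite -!horner_coef0 hornerM !horner_coef0.
case: (ltnP i l) => il; first by rewrite l1 // mul0r.
by rewrite l2 ?mulr0 //; apply: leq_ltn_trans ij.
Qed.

Lemma Iminus_inv (k : fieldType) (n : nat) (g : 'M[Ks k]_n) :
  Iminus g -> Iminus (invmx g).
Proof.
move=> [P [u e l]].
exists (invmx P); split.
- by rewrite unitmx_inv.
- by rewrite e !map_evinv map_invmx_unit.
have lQ : lowt (map_mx (c0R k) P).
  by move=> i j ij; rewrite mxE c0RE l.
have := lowt_inv lQ; rewrite -map_invmx_unit // => h i j ij.
by have := h i j ij; rewrite mxE c0RE.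
Qed.

Definition qd (d : nat) {n : nat} (i : 'I_n) : int := Posz (i %/ d)%N.
Definition phi (k : fieldType) (d : nat) {n : nat} (C : 'M[k]_n) : 'M[Ks k]_n :=
  \matrix_(i, j) (cst (C i j) * svar k ^ (qd d i - qd d j)).

Lemma phi_mul (k : fieldType) (d n : nat) (A B : 'M[k]_n) :
  phi k d (A *m B) = phi k d A *m phi k d B.
Proof.
apply/matrixP => i j; rewrite !mxE cstE rmorph_sum mulr_suml; apply: eq_bigr => l _.
rewrite !mxE rmorphM -!cstE.
have E : qd d i - qd d j = (qd d i - qd d l) + (qd d l - qd d j).
  by rewrite addrA subrK.
by rewrite E expfzDr ?svar_neq0 // mulrACA.
Qed.

Lemma phi_one (k : fieldType) (d n : nat) : phi k d (1%:M : 'M[k]_n) = 1%:M.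
Proof.
apply/matrixP => i j; rewrite !mxE; case: eqVneq => [->|_].
  by rewrite subrr expr0z mulr1 cstE rmorph1.
by rewrite cstE rmorph0 mul0r.
Qed.

Lemma phi_inv (k : fieldType) (d n : nat) (C : 'M[k]_n) :
  C \in unitmx -> invmx (phi k d C) = phi k d (invmx C).
Proof.
move=> uC; apply: inv_of_mul1.
by rewrite -phi_mul mulmxV // phi_one.
Qed.

Definition pat (d : nat) {F : nzRingType} {n : nat} (C : 'M[F]_n) : Prop :=
  forall i j : 'I_n, ~~ (i == j %[mod d])%N -> C i j = 0.

Lemma pat_mul (d : nat) {F : nzRingType} {n : nat} (A B : 'M[F]_n) :
  pat d A -> pat d B -> pat d (A *m B).
Proof.
move=> hA hB i j ij; rewrite mxE big1 // => l _.
have [il|il] := boolP (i == l %[mod d])%N; last by rewrite hA // mul0r.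
rewrite hB ?mulr0 //; apply: contra ij => /eqP lj; move/eqP: il => ->.
by rewrite lj.
Qed.

Lemma pat_inv (d : nat) {F : fieldType} {n : nat} (C : 'M[F]_n) :
  pat d C -> pat d (invmx C).
Proof.
apply: inv_closed.
- move=> i j ij; rewrite mxE; case: eqVneq => // e.
  by rewrite e eqxx in ij.
- by move=> A B hA hB i j ij; rewrite mxE hA // hB // addr0.
- by move=> a A hA i j ij; rewrite mxE hA // mulr0.
- exact: pat_mul.
Qed.

Lemma Lexp_eq (d n : nat) (i j : 'I_n) : (0 < d)%N -> (i == j %[mod d])%N ->
  Lexp d i j = qd d i - qd d j.
Proof.
move=> d0 /eqP ij.
have h : (Posz i - Posz j = (qd d i - qd d j) * Posz d)%R.
  rewrite /qd {1}(divn_eq i d) {1}(divn_eq j d) ij.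
  rewrite !PoszD !PoszM; ring.
by rewrite /Lexp h mulzK // eqz_nat -lt0n.
Qed.

Definition elem {F : nzRingType} {n : nat} (i j : 'I_n) (a : F) : 'M[F]_n :=
  1%:M + a *: delta_mx i j.

Lemma elem_mulN {F : comUnitRingType} {n : nat} (i j : 'I_n) (a : F) :
  i != j -> elem i j a *m elem i j (- a) = 1%:M.
Proof.
move=> ij; rewrite /elem mulmxDl mulmxDr !mul1mx mulmxDr mulmx1.
rewrite -scalemxAl -scalemxAr mul_delta_mx_cond eq_sym (negbTE ij) mulr0n.
by rewrite !scaler0 addr0 scaleNr subrK.
Qed.

Lemma elem_unit {F : comUnitRingType} {n : nat} (i j : 'I_n) (a : F) :
  i != j -> elem i j a \in unitmx.
Proof. by move=> ij; case: (mulmx1_unit (elem_mulN i j a ij)). Qed.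

Lemma phi_elem (k : fieldType) (d n : nat) (i j : 'I_n) (a : k) :
  (0 < d)%N -> (i == j %[mod d])%N ->
  phi k d (elem i j a) = rootel i j (Lexp d i j) a.
Proof.
move=> d0 ij; rewrite /rootel (Lexp_eq _ _ _ _ d0 ij).
apply/matrixP => x y; rewrite !mxE cstE rmorphD rmorphM !rmorph_nat -cstE.
case: (x =P i) => [->|_]; case: (y =P j) => [->|_]; rewrite /= ?mulr0 ?mulr1 ?addr0 ?add0r.
all: case: eqVneq => [e|ne]; rewrite ?e ?subrr ?expr0z ?mulr1 ?mulr0n ?mul0r ?add0r //.
Qed.

Lemma phi_diag (k : fieldType) (d n : nat) (t : 'I_n -> k) :
  phi k d (diag_mx (\row_i t i)) = diag_mx (\row_i cst (t i)).
Proof.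
apply/matrixP => x y; rewrite !mxE; case: (x =P y) => [->|_].
  by rewrite subrr expr0z !mulr1n mulr1.
by rewrite !mulr0n cstE rmorph0 mul0r.
Qed.

Lemma L_desc (k : fieldType) (n d : nat) (g : 'M[Ks k]_n) : (0 < d)%N ->
  Lgrp d g -> exists C : 'M[k]_n, [/\ C \in unitmx, pat d C & g = phi k d C].
Proof.
move=> d0; elim => [|h hS|g1 g2 _ [C1 [u1 p1 e1]] _ [C2 [u2 p2 e2]]|g1 _ [C [u p e]]].
- exists 1%:M; split; [exact: unitmx1| |by rewrite phi_one].
  by move=> i j ij; rewrite mxE; case: eqVneq => // e; rewrite e eqxx in ij.
- case: hS => [[t [t0 ->]]|[i [j [a [ij cij ->]]]]].
    exists (diag_mx (\row_i t i)); split; last by rewrite phi_diag.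
      rewrite unitmxE det_diag unitfE prodf_seq_neq0; apply/allP => i _ /=.
      by rewrite mxE t0.
    by move=> i j ij; rewrite mxE; case: eqVneq => // e; rewrite e eqxx in ij.
  exists (elem i j a); split; first exact: elem_unit.
    move=> x y xy; rewrite !mxE; case: eqVneq => [e|_]; first by rewrite e eqxx in xy.
    case: (x =P i) => [ex|_]; last by rewrite andFb mulr0 addr0.
    case: (y =P j) => [ey|_]; last by rewrite mulr0 addr0.
    by rewrite ex ey cij in xy.
  by rewrite phi_elem.
- exists (C1 *m C2); split; first by rewrite unitmx_mul u1 u2.
    exact: pat_mul.
  by rewrite e1 e2 phi_mul.
- exists (invmx C); split; first by rewrite unitmx_inv.
    exact: pat_inv.
  by rewrite e phi_inv.
Qed.

Lemma divn_addmul (d t x : nat) : (0 < d)%N -> ((x + t * d) %/ d = t + x %/ d)%N.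
Proof. by move=> d0; rewrite addnC divnMDl. Qed.

Definition Eexp (d : nat) {n : nat} (lam : 'I_n -> int) (i j : 'I_n) : int :=
  lam i - lam j + qd d i - qd d j.

Lemma simple_root (k : fieldType) (n : nat) (w : 'S_n) (lam : 'I_n -> int)
  (i m : 'I_n) : i != m -> wpos (wtil k w lam) i m (-1) ->
  (0 <= lam i - lam m - 1)%R /\
  (lam i - lam m - 1 = 0 -> ((w^-1)%g i < (w^-1)%g m)%N).
Proof.
move=> im H; have [P [eP uP lP]] := H 1.
set a := (w^-1)%g i; set b := (w^-1)%g m.
have := congr1 (fun M : 'M[Ks k]_n => M a b) eP; rewrite conj_entry /= !mxE !permKV.
rewrite eqxx (negbTE im) /= eqxx mulr1 add0r cstE rmorph1 mul1r.
rewrite -!expfzDr ?svar_neq0 // => hs.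
have he : lam i + -1 + - lam m = lam i - lam m - 1 by rewrite addrAC.
rewrite he in hs; split; first exact: pow_poly_ge0 hs.
move=> h0; rewrite h0 expr0z in hs.
have P1 : P a b = 1.
  by apply/eqP; rewrite -tofrac_eq -hs tofrac1.
have ab : a != b by rewrite (inj_eq perm_inj).
rewrite ltn_neqAle ab /=; rewrite leqNgt; apply/negP => ba.
by have := lP a b ba; rewrite P1 coef1 /=; move/eqP; rewrite oner_eq0.
Qed.

Lemma chain (k : fieldType) (n d : nat) (w : 'S_n) (lam : 'I_n -> int) :
  (0 < d)%N ->
  (forall i j : 'I_n, nat_of_ord j = (i + d)%N -> wpos (wtil k w lam) i j (-1)) ->
  forall t (i j : 'I_n), nat_of_ord j = (i + t.+1 * d)%N ->
  (0 <= Eexp d lam i j)%R /\ (Eexp d lam i j = 0 -> ((w^-1)%g i < (w^-1)%g j)%N).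
Proof.
move=> d0 Hs; elim => [|t IH] i j hj.
  have ij : i != j by apply/eqP => e; move: hj; rewrite e; lia.
  have hj' : nat_of_ord j = (i + d)%N by rewrite hj mul1n.
  have [h1 h2] := simple_root k n w lam i j ij (Hs i j hj').
  have hE : Eexp d lam i j = lam i - lam j - 1.
    rewrite /Eexp /qd hj divn_addmul // PoszD; ring.
  by rewrite hE; split.
have hm : (i + d < n)%N by have := ltn_ord j; rewrite hj; lia.
pose m := Ordinal hm.
have im : i != m.
  by apply/eqP => e; have := congr1 (@nat_of_ord n) e; rewrite /= => h; lia.
have [h1 h2] := simple_root k n w lam i m im (Hs i m erefl).
have hj2 : nat_of_ord j = (m + t.+1 * d)%N by rewrite hj /= mulSn addnA.
have [h3 h4] := IH m j hj2.
have eq1 : qd d m = qd d i + 1.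
  have h := divn_addmul d 1 i d0; rewrite mul1n in h.
  by rewrite /qd /= h PoszD addrC.
have hE : Eexp d lam i j = (lam i - lam m - 1) + Eexp d lam m j.
  rewrite /Eexp eq1; ring.
rewrite hE; split; first exact: addr_ge0.
move=> h0.
have e1 : lam i - lam m - 1 = 0.
  apply/eqP; rewrite eq_le h1 andbT; rewrite -h0 lerDl //.
have e2 : Eexp d lam m j = 0 by rewrite e1 add0r in h0.
exact: ltn_trans (h2 e1) (h4 e2).
Qed.

Lemma exists_t (d n : nat) (i j : 'I_n) : (0 < d)%N -> (i < j)%N ->
  (i == j %[mod d])%N -> exists t, nat_of_ord j = (i + t.+1 * d)%N.
Proof.
move=> d0 ij cij.
have dv : (d %| j - i)%N.
  by rewrite -eqn_mod_dvd; [rewrite eq_sym | exact: ltnW].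
have hq := divnK dv.
have q0 : (0 < (j - i) %/ d)%N.
  rewrite lt0n; apply/eqP => q0; rewrite q0 mul0n in hq.
  by rewrite -subn_gt0 -hq in ij.
exists ((j - i) %/ d).-1; rewrite prednK // hq subnKC //; exact: ltnW.
Qed.

Lemma fwd_lowt (k : fieldType) (n d : nat) (w : 'S_n) (lam : 'I_n -> int) :
  (0 < d)%N ->
  (forall i j : 'I_n, nat_of_ord j = (i + d)%N -> wpos (wtil k w lam) i j (-1)) ->
  forall C : 'M[k]_n, pat d C -> Iminus (conjm (wtil k w lam) (phi k d C)) -> lowt C.
Proof.
move=> d0 Hs C pC [P [uP eP lP]] i j ij.
have [cij|ncij] := boolP (i == j %[mod d])%N; last exact: pC.
apply/eqP; apply: contraT => c0.
have [t ht] := exists_t _ _ _ _ d0 ij cij.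
have [h1 h2] := chain k n d w lam d0 Hs t i j ht.
set a := (w^-1)%g i; set b := (w^-1)%g j.
have := congr1 (fun M : 'M[Ks k]_n => M a b) eP; rewrite conj_entry !mxE !permKV.
have hx : svar k ^ lam i * (cst (C i j) * svar k ^ (qd d i - qd d j)) * svar k ^ (- lam j)
    = cst (C i j) * svar k ^ (Eexp d lam i j).
  rewrite mulrCA -mulrA -!expfzDr ?svar_neq0 //; congr (_ * (_ ^ _)).
  rewrite /Eexp; ring.
rewrite hx.
have [e he] : exists e : nat, Eexp d lam i j = Posz e.
  by move: h1; case: (Eexp d lam i j) => // e _; exists e.
rewrite he => hq.
have [e0 pc] := @evinv_pow k (C i j) e (P a b) c0 hq.
have hE0 : Eexp d lam i j = 0 by rewrite he e0.
have ab := h2 hE0.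
by move: (lP a b ab); rewrite pc => c00; rewrite c00 eqxx in c0.
Qed.

Definition lowset {F : nzRingType} {n : nat} (U : 'M[F]_n) : {set 'I_n * 'I_n} :=
  [set p : 'I_n * 'I_n | (p.2 < p.1)%N && (U p.1 p.2 != 0)].

Lemma unip_one {F : nzRingType} {n : nat} (U : 'M[F]_n) :
  lowset U = set0 -> lowt U -> (forall i, U i i = 1) -> U = 1%:M.
Proof.
move=> A0 lU dU; apply/matrixP => x y; rewrite mxE.
case: (ltngtP x y) => [xy|yx|xy].
- have nxy : x != y by apply/eqP => e; rewrite e ltnn in xy.
  by rewrite lU // (negbTE nxy).
- have nxy : x != y by apply/eqP => e; rewrite e ltnn in yx.
  have : (x, y) \notin lowset U by rewrite A0 inE.
  by rewrite inE /= yx /= negbK (negbTE nxy) => /eqP ->.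
by rewrite (val_inj xy) eqxx dU.
Qed.

Lemma unip_gen (k : fieldType) (n d : nat) : (0 < d)%N -> forall N (U : 'M[k]_n),
  (#|lowset U| <= N)%N -> lowt U -> pat d U -> (forall i, U i i = 1) ->
  BLminus d (phi k d U).
Proof.
move=> d0; elim => [|N IH] U cU lU pU dU.
  move: cU; rewrite leqn0 cards_eq0 => /eqP A0.
  rewrite (unip_one U A0 lU dU) phi_one; exact: gen_one.
case: (set_0Vmem (lowset U)) => [A0|[p0 pA]].
  rewrite (unip_one U A0 lU dU) phi_one; exact: gen_one.
case: (@arg_minnP _ p0 (fun q => q \in lowset U) (fun q => nat_of_ord q.2) pA) => q qA qmin.
case: q qA qmin => r m qA qmin.
move: (qA); rewrite inE /= => /andP [mr u0].
set u := U r m in u0.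
have rm : r != m by apply/eqP => e; rewrite e ltnn in mr.
have crm : (r == m %[mod d])%N by apply: contraNT u0 => h; rewrite /u pU.
have rowm : forall y, U m y = (y == m)%:R.
  move=> y; case: (ltngtP y m) => [ym|my|ym].
  - have nym : y != m by apply/eqP => e; rewrite e ltnn in ym.
    rewrite (negbTE nym); apply/eqP; apply: contraT => h.
    have : (m, y) \in lowset U by rewrite inE /= ym h.
    by move/qmin => /=; rewrite leqNgt ym.
  - have nym : y != m by apply/eqP => e; rewrite e ltnn in my.
    by rewrite lU // (negbTE nym).
  - by rewrite (val_inj ym) eqxx dU.
pose U' := \matrix_(x, y) if (x == r) && (y == m) then 0 else U x y.
have mr' : m != r by rewrite eq_sym.
have eU : U = elem r m u *m U'.
  apply/matrixP => x y; rewrite /elem mulmxDl mul1mx -scalemxAl !mxE.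
  rewrite (bigD1 m) //= big1 => [|z zm]; last by rewrite !mxE (negbTE zm) andbF mul0r.
  rewrite !mxE eqxx andbT (negbTE mr') andFb rowm addr0.
  case: (x =P r) => [->|xr] /=; last by rewrite mul0r mulr0 addr0.
  rewrite mul1r.
  case: (y =P m) => [->|ym] /=; first by rewrite mulr1 add0r.
  by rewrite mulr0 addr0.
have lU' : lowset U' = lowset U :\ (r, m).
  apply/setP => -[x y]; rewrite !inE /= mxE xpair_eqE.
  by case: (x == r); case: (y == m); rewrite ?eqxx ?andbF ?andbT //.
have cU' : (#|lowset U'| <= N)%N.
  by move: cU; rewrite (cardsD1 (r, m)) qA lU' add1n ltnS.
have BU' : BLminus d (phi k d U').
  apply: IH => //.
  - by move=> x y xy; rewrite mxE lU // if_same.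
  - by move=> x y xy; rewrite mxE pU // if_same.
  - move=> x; rewrite mxE; case: (x =P r) => [->|] //=.
    by rewrite (negbTE rm) /= dU.
rewrite eU phi_mul; apply: gen_mul => //.
apply: gen_in; right; exists r, m, u; split => //.
exact: phi_elem.
Qed.

Lemma lower_BL (k : fieldType) (n d : nat) (C : 'M[k]_n) : (0 < d)%N ->
  C \in unitmx -> lowt C -> pat d C -> BLminus d (phi k d C).
Proof.
move=> d0 uC lC pC.
have trig : is_trig_mx C by apply/is_trig_mxP.
have cd : forall i, C i i != 0.
  move=> i; move: uC; rewrite unitmxE det_trig // unitfE prodf_seq_neq0.
  by move=> /allP /(_ i (mem_index_enum i)).
pose D := diag_mx (\row_i C i i).
pose U := diag_mx (\row_i (C i i)^-1) *m C.
have eC : C = D *m U.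
  apply/matrixP => x y; rewrite /U /D !mul_diag_mx !mxE mulrA mulfV // mul1r.
  by [].
rewrite eC phi_mul; apply: gen_mul.
  apply: gen_in; left; exists (fun i => C i i); split => //; exact: phi_diag.
apply: (unip_gen k n d d0 _ U (leqnn _)).
- by move=> x y xy; rewrite /U mul_diag_mx mxE lC // mulr0.
- by move=> x y xy; rewrite /U mul_diag_mx mxE pC // mulr0.
- by move=> x; rewrite /U mul_diag_mx !mxE mulVf.
Qed.

Lemma forward (k : fieldType) (n d : nat) (w : 'S_n) (lam : 'I_n -> int) :
  (0 < d)%N ->
  (forall i j : 'I_n, nat_of_ord j = (i + d)%N -> wpos (wtil k w lam) i j (-1)) ->
  forall g, Lgrp d g -> Iminus (conjm (wtil k w lam) g) -> BLminus d g.
Proof.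
move=> d0 Hs g Lg Ig.
have [C [uC pC eg]] := L_desc k n d g d0 Lg.
rewrite eg in Ig *.
apply: lower_BL => //.
exact: (fwd_lowt k n d w lam d0 Hs C pC Ig).
Qed.

Lemma conj_mul (k : fieldType) (n : nat) (X g h : 'M[Ks k]_n) :
  X \in unitmx -> conjm X (g *m h) = conjm X g *m conjm X h.
Proof. by move=> uX; rewrite /conjm !mulmxA mulmxKV. Qed.

Lemma conj_one (k : fieldType) (n : nat) (X : 'M[Ks k]_n) :
  X \in unitmx -> conjm X 1%:M = 1%:M.
Proof. by move=> uX; rewrite /conjm mulmx1 mulmxV. Qed.

Lemma conj_inv (k : fieldType) (n : nat) (X g : 'M[Ks k]_n) :
  X \in unitmx -> conjm X (invmx g) = invmx (conjm X g).
Proof.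
move=> uX; have [ug|nug] := boolP (g \in unitmx).
  symmetry; apply: inv_of_mul1.
  by rewrite -conj_mul // mulmxV // conj_one.
have nc : conjm X g \notin unitmx.
  by rewrite /conjm !unitmx_mul (negbTE nug) andbF.
by rewrite (invmx_out nug) (invmx_out nc).
Qed.

Lemma evinvC (k : fieldType) (c : k) : evinv c%:P = cst c.
Proof.
rewrite /evinv (_ : map_poly (@cst k) c%:P = (cst c)%:P) ?hornerC //.
apply/polyP => i; rewrite coef_map_id0 ?coefC; last by rewrite cstE rmorph0.
by case: (i == 0)%N; rewrite // cstE rmorph0.
Qed.

Lemma Iminus_torus (k : fieldType) (n : nat) (w : 'S_n) (lam : 'I_n -> int)
  (t : 'I_n -> k) : (forall i, t i != 0) ->
  Iminus (conjm (wtil k w lam) (diag_mx (\row_i cst (t i)))).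
Proof.
move=> t0.
exists (diag_mx (\row_a (t (w a))%:P)); split.
- have h : diag_mx (\row_a (t (w a))%:P) *m diag_mx (\row_a ((t (w a))^-1)%:P) = 1%:M.
    apply/matrixP => x y; rewrite mul_diag_mx !mxE.
    case: (x =P y) => [->|_]; last by rewrite !mulr0n mulr0.
    by rewrite !mulr1n -polyCM mulfV.
  by case: (mulmx1_unit h).
- apply/matrixP => a b; rewrite conj_entry !mxE (inj_eq perm_inj).
  case: (a =P b) => [->|_].
    rewrite !mulr1n evinvC mulrAC -expfzDr ?svar_neq0 // subrr expr0z.
    by rewrite mul1r.
  by rewrite !mulr0n mulr0 mul0r evinvE rmorph0.
- move=> x y xy; rewrite mxE.
  case: (x =P y) => [e|_]; first by rewrite e ltnn in xy.
  by rewrite mulr0n coef0.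
Qed.

Lemma sdiag (k : fieldType) (n : nat) (g : 'I_n -> 'I_n) (f : 'I_n -> int) (x y : 'I_n) :
  svar k ^ (f (g x)) * (x == y)%:R * svar k ^ (- f (g y)) = (x == y)%:R.
Proof.
case: (x =P y) => [->|_]; last by rewrite mulr0 mul0r.
by rewrite mulr1 -expfzDr ?svar_neq0 // subrr expr0z.
Qed.

Lemma Iminus_root (k : fieldType) (n d : nat) (w : 'S_n) (lam : 'I_n -> int) :
  (0 < d)%N ->
  (forall i j : 'I_n, nat_of_ord j = (i + d)%N -> wpos (wtil k w lam) i j (-1)) ->
  forall (i j : 'I_n) (a : k), (j < i)%N -> (i == j %[mod d])%N ->
  Iminus (conjm (wtil k w lam) (rootel i j (Lexp d i j) a)).
Proof.
move=> d0 Hs i j a ji cij.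
have cji : (j == i %[mod d])%N by rewrite eq_sym.
have [t ht] := exists_t d n j i d0 ji cji.
have [h1 h2] := chain k n d w lam d0 Hs t j i ht.
have [e he] : exists e : nat, Eexp d lam j i = Posz e.
  by move: h1; case: (Eexp d lam j i) => // e _; exists e.
set a' := (w^-1)%g i; set b' := (w^-1)%g j.
have ij : i != j by apply/eqP => e'; rewrite e' ltnn in ji.
have ab : a' != b' by rewrite (inj_eq perm_inj).
exists (elem a' b' (a%:P * 'X^e)); split.
- exact: elem_unit.
- apply/matrixP => x y.
  rewrite conj_entry (Lexp_eq _ _ _ _ d0 cij) /rootel /elem !mxE.
  rewrite (inj_eq perm_inj) !(canF_eq (permK w)) -/a' -/b'.
  rewrite evinvE rmorphD rmorphM !rmorph_nat.
  case: (x =P a') => [->|/eqP xa]; case: (y =P b') => [->|/eqP yb];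
    rewrite ?eqxx ?(negbTE xa) ?(negbTE yb) ?andbT ?andbF ?andFb ?andTb;
    rewrite ?mulr0 ?mulr1 ?addr0 ?(negbTE ab) ?add0r.
  + rewrite /a' /b' !permKV rmorphM rmorphXn /= horner_morphC horner_morphX.
    rewrite -cstE mulrCA -mulrA -!expfzDr ?svar_neq0 //.
    rewrite -[_^-1 ^+ e]/((svar k)^-1 ^ (Posz e)) exprz_inv; congr (_ * (_ ^ _)).
    by rewrite -he /Eexp; ring.
  + case: (a' =P y) => [<-|_]; [by rewrite mulr1 -expfzDr ?svar_neq0 // subrr expr0z | by rewrite mulr0 mul0r].
  + case: (x =P b') => [<-|_]; [by rewrite mulr1 -expfzDr ?svar_neq0 // subrr expr0z | by rewrite mulr0 mul0r].
  + case: (x =P y) => [<-|_]; [by rewrite mulr1 -expfzDr ?svar_neq0 // subrr expr0z | by rewrite mulr0 mul0r].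
- move=> x y xy; rewrite !mxE.
  have nxy : x != y by apply/eqP => e'; rewrite e' ltnn in xy.
  rewrite (negbTE nxy) add0r.
  case: (x =P a') => [ex|_]; case: (y =P b') => [ey|_] /=; rewrite ?mulr0 ?coef0 //.
  rewrite mulr1 coefCM coefXn.
  case: e he => [|e] he /=; last by rewrite mulr0.
  have := h2 he; rewrite -/a' -/b' -ex -ey => yx.
  by move: (ltn_trans xy yx); rewrite ltnn.
Qed.

Lemma backward (k : fieldType) (n d : nat) (w : 'S_n) (lam : 'I_n -> int) :
  (0 < d)%N ->
  (forall i j : 'I_n, nat_of_ord j = (i + d)%N -> wpos (wtil k w lam) i j (-1)) ->
  forall g, BLminus d g -> Lgrp d g /\ Iminus (conjm (wtil k w lam) g).
Proof.
move=> d0 Hs g Bg.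
have uX := wt_unit k w lam.
elim: Bg => [|h Sh|g1 g2 _ [L1 I1] _ [L2 I2]|g1 _ [L1 I1]].
- split; first exact: gen_one.
  rewrite (conj_one k n _ uX); exact: Iminus_one.
- case: Sh => [[t [t0 ->]]|[i [j [a [ji cij ->]]]]].
  + split; first by apply: gen_in; left; exists t.
    exact: Iminus_torus.
  + split.
      apply: gen_in; right; exists i, j, a; split => //.
      by apply/eqP => e; rewrite e ltnn in ji.
    exact: (Iminus_root k n d w lam d0 Hs i j a ji cij).
- split; first exact: gen_mul.
  rewrite (conj_mul k n _ _ _ uX); exact: Iminus_mul.
- split; first exact: gen_inv.
  rewrite (conj_inv k n _ _ uX); exact: Iminus_inv.
Qed.

Theorem lemma10p3 (k : fieldType) (n d : nat) (hd0 : (0 < d)%N) (hdn : (d <= n)%N)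
  (w : 'S_n) (lam : 'I_n -> int) :
  (* wt alpha > 0 for every alpha = alpha_{i,i+d} - 1 in Delta(L) *)
  (forall i j : 'I_n, nat_of_ord j = (i + d)%N -> wpos (wtil k w lam) i j (-1)) ->
  (* L ∩ wt^-1 I^- wt = B_L^- *)
  forall g : 'M[Ks k]_n,
    (Lgrp d g /\ Iminus (conjm (wtil k w lam) g)) <-> BLminus d g.
Proof.
move=> Hs g; split.
- by case=> Lg Ig; exact: (forward k n d w lam hd0 Hs g Lg Ig).
- exact: (backward k n d w lam hd0 Hs g).
Qed.
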